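(* Let $G$ be a connected graph and let $H$ be a connected component of the complement $\overline{G}$ such that $H$ is isomorphic to the complete graph $K_n$ for some $n\geq 2$. Then no vertex of $H$ is a basis forced vertex of $G$.
   Context: All graphs are finite and simple. $\overline{G}$ denotes the complement graph. For vertices $u,v$ of a connected graph $G$, $d(u,v)$ is the length of a shortest $u$–$v$ path. A set $R\subseteq V(G)$ is a resolving set if for all distinct $x,y\in V(G)$ there is $r\in R$ with $d(r,x)\neq d(r,y)$. The metric dimension $\dim(G)$ is the minimum cardinality of a resolving set, and a resolving set of cardinality $\dim(G)$ is a metric basis. A vertex is a basis forced vertex if it belongs to every metric basis of $G$. *)

(* Defs.v *)
From mathcomp Require Import all_boot.
Set Implicit Arguments. Unset Strict Implicit. Unset Printing Implicit Defensive.

Definition simple_graph (T : finType) (e : rel T) : Prop :=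
  symmetric e /\ irreflexive e.

Definition connected_graph (T : finType) (e : rel T) : Prop :=
  forall u v : T, connect e u v.

Definition compl_rel (T : finType) (e : rel T) : rel T :=
  fun x y => (x != y) && ~~ e x y.

Fixpoint walk (T : finType) (e : rel T) (k : nat) (u v : T) : bool :=
  match k with
  | 0 => u == v
  | k'.+1 => [exists w, e u w && walk e k' w v]
  end.

(* shortest path distance: least k with a walk of length k (any shortest
   path has fewer than #|T| edges; value #|T| if unreachable, which does not
   occur in connected graphs) *)
Definition dist (T : finType) (e : rel T) (u v : T) : nat :=
  find (fun k => walk e k u v) (iota 0 #|T|).

Definition resolving (T : finType) (e : rel T) (R : {set T}) : Prop :=
  forall x y : T, x != y -> exists2 r, r \in R & dist e r x != dist e r y.

Definition metric_basis (T : finType) (e : rel T) (R : {set T}) : Prop :=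
  resolving e R /\ forall R' : {set T}, resolving e R' -> #|R| <= #|R'|.

Definition basis_forced (T : finType) (e : rel T) (v : T) : Prop :=
  forall R : {set T}, metric_basis e R -> v \in R.

Definition is_component (T : finType) (f : rel T) (H : {set T}) : Prop :=
  exists x : T, H = [set y | connect f x y].

Definition induced_iso_Kn (T : finType) (f : rel T) (H : {set T}) (n : nat) : Prop :=
  exists g : 'I_n -> T,
    injective g /\ (forall y, y \in H -> exists i, g i = y) /\
    (forall i, g i \in H) /\ (forall i j, f (g i) (g j) = (i != j)).

(* Main.v *)
Require Import Defs.
From mathcomp Require Import all_boot.

Section Aux.
Variables (T : finType) (e : rel T).

Lemma walk1 a b : walk e 1 a b = e a b.
Proof.
apply/existsP/idP => [[w /andP[h /eqP <-]] //| h].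
by exists b; rewrite h eqxx.
Qed.

Lemma dist_self a : dist e a a = 0.
Proof.
rewrite /dist; have : 0 < #|T| by apply/card_gt0P; exists a.
by case: #|T| => // n _ /=; rewrite eqxx.
Qed.

Lemma dist_neq0 a b : a != b -> dist e a b != 0.
Proof.
move=> ab; rewrite /dist; have : 0 < #|T| by apply/card_gt0P; exists a.
by case: #|T| => // n _ /=; rewrite (negbTE ab).
Qed.

Lemma dist1 a b : a != b -> (dist e a b == 1) = e a b.
Proof.
move=> ab; rewrite /dist.
have : 1 < #|T|.
  apply: leq_trans (max_card (mem [set a; b])).
  by rewrite cards2 ab.
case: #|T| => [|[|n]] // _.
have -> : iota 0 n.+2 = [:: 0, 1 & iota 2 n] by [].
rewrite /= -/(walk e 0 a b) /= (negbTE ab) -/(walk e 1 a b) walk1.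
by case: (e a b).
Qed.

Lemma dist_distinct r x y : x != y -> r \in [:: x; y] ->
  dist e r x != dist e r y.
Proof.
move=> xy; rewrite !inE => /orP[] /eqP ->.
  by rewrite dist_self eq_sym dist_neq0.
by rewrite dist_self dist_neq0 // eq_sym.
Qed.

Lemma walk_inv (s : T -> T) (hsK : involutive s)
  (hs : forall a b, e (s a) (s b) = e a b) k a b :
  walk e k (s a) (s b) = walk e k a b.
Proof.
elim: k a => [|k IH] a /=.
  by rewrite (inj_eq (inv_inj hsK)).
apply/existsP/existsP => [[w /andP[h1 h2]] | [w /andP[h1 h2]]].
  exists (s w); rewrite -hs hsK h1 /= -IH hsK //.
exists (s w); by rewrite hs h1 IH.
Qed.

Lemma dist_inv (s : T -> T) (hsK : involutive s)
  (hs : forall a b, e (s a) (s b) = e a b) a b :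
  dist e (s a) (s b) = dist e a b.
Proof. by rewrite /dist; apply: eq_find => k; apply: walk_inv. Qed.

Definition resb (R : {set T}) :=
  [forall x, forall y, (x != y) ==> [exists r in R, dist e r x != dist e r y]].

Lemma resP R : reflect (resolving e R) (resb R).
Proof.
apply: (iffP idP).
  move=> /forallP h x y xy; move: (h x) => /forallP /(_ y) /implyP /(_ xy).
  by case/existsP => r /andP[rR d]; exists r.
move=> h; apply/forallP => x; apply/forallP => y; apply/implyP => xy.
by case: (h x y xy) => r rR d; apply/existsP; exists r; rewrite rR.
Qed.

End Aux.

Theorem lemma5 (T : finType) (e : rel T) (H : {set T}) (n : nat) :
  simple_graph e -> connected_graph e ->
  is_component (compl_rel e) H -> 2 <= n -> induced_iso_Kn (compl_rel e) H n ->
  forall v, v \in H -> ~ basis_forced e v.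
Proof.
move=> [esym eirr] _ [x0 HE] n2 [g [ginj [gsurj [gH gK]]]] v vH forced.
have inH a b : a \in H -> b \in H -> e a b = false.
  move=> aH bH; have [->|ab] := eqVneq a b; first by rewrite eirr.
  have [i gi] := gsurj a aH; have [j gj] := gsurj b bH.
  have : compl_rel e a b by rewrite -gi -gj gK; apply: contraNneq ab => ij; by rewrite -gi -gj ij.
  by rewrite /compl_rel => /andP[_ /negbTE].
have outH a b : a \in H -> b \notin H -> e a b.
  move=> aH bH; have ab : a != b by apply: contraNneq bH => <-.
  apply: contraNT bH => nab.
  have cab : compl_rel e a b by rewrite /compl_rel ab nab.
  move: aH; rewrite HE !inE => ca; apply: connect_trans ca _.
  exact: connect1.
have twin a b z : a \in H -> b \in H -> e a z = e b z.
  move=> aH bH; case zH: (z \in H); first by rewrite !inH.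
  by rewrite !outH ?zH.
have [u uH uv] : exists2 u, u \in H & u != v.
  have h01 : (Ordinal (n2 : 1 < n)) != (Ordinal (ltnW n2 : 0 < n)) by [].
  have [h|h] := eqVneq (g (Ordinal (n2 : 1 < n))) v.
    exists (g (Ordinal (ltnW n2 : 0 < n))); first exact: gH.
    by rewrite -h (inj_eq ginj) eq_sym.
  by exists (g (Ordinal (n2 : 1 < n))); first exact: gH.
pose s z := if z == u then v else if z == v then u else z.
have sK : involutive s.
  move=> z; rewrite /s; have [->|zu] := eqVneq z u.
    by rewrite eqxx eq_sym (negbTE uv).
  have [->|zv] := eqVneq z v; first by rewrite eqxx.
  by rewrite (negbTE zu) (negbTE zv).
have sH z : z \in H -> s z \in H.
  by move=> zH; rewrite /s; case: ifP => _ //; case: ifP.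
have se1 a c : e (s a) c = e a c.
  rewrite /s; have [->|au] := eqVneq a u; first by apply: twin.
  have [->|av] := eqVneq a v; first by apply: twin.
  by [].
have se a b : e (s a) (s b) = e a b.
  by rewrite se1 esym se1 esym.
have ds := @dist_inv T e s sK se.
have resT : @resb _ e setT.
  apply/resP => x y xy; exists x; first by rewrite inE.
  by apply: dist_distinct; rewrite ?inE ?eqxx.
case: (arg_minnP (fun R : {set T} => #|R|) resT) => R0 /resP R0r R0min.
have R0b : metric_basis e R0.
  by split=> // R' /resP; apply: R0min.
have vR0 := forced R0 R0b.
have [HR0|[w wH wR0]] : {subset H <= R0} \/ exists2 w, w \in H & w \notin R0.
    case: (boolP [forall z, (z \in H) ==> (z \in R0)]) => h.
      by left => z zH; move/forallP: h => /(_ z) /implyP; apply.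
    right; move/forallPn: h => [z]; rewrite negb_imply => /andP[zH zR].
    by exists z.
- (* R0 :\ v is resolving: contradiction *)
  have res' : resolving e (R0 :\ v).
    move=> x y xy; case: (R0r x y xy) => r rR d.
    have [rv|rv] := eqVneq r v; last by exists r; rewrite // !inE rv.
    subst r.
    case xR: (x \in R0 :\ v).
      by exists x => //; apply: dist_distinct; rewrite ?inE ?eqxx.
    case yR: (y \in R0 :\ v).
      by exists y => //; apply: dist_distinct; rewrite ?inE ?eqxx ?orbT.
    have uR : u \in R0 :\ v by rewrite !inE uv HR0.
    have nH z : z \notin R0 :\ v -> z != v -> z \notin H.
      move=> zR zv; apply: contra zR => zH; by rewrite !inE zv HR0.
    have euv : e u v = false by rewrite inH.
    have [xv|xv] := eqVneq x v.
      subst x; exists u => //.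
      have yv : y != v by rewrite eq_sym.
      have yH := nH y (negbT yR) yv.
      have uy : u != y by apply: contraNneq yH => <-.
      have := @dist1 _ e _ _ uy; rewrite outH // => /eqP ->.
      by have := @dist1 _ e _ _ uv; rewrite euv => /negbT.
    have [yv|yv] := eqVneq y v.
      subst y; exists u => //.
      have xH := nH x (negbT xR) xv.
      have ux : u != x by apply: contraNneq xH => <-.
      have := @dist1 _ e _ _ ux; rewrite outH // => /eqP ->.
      by have := @dist1 _ e _ _ uv; rewrite euv eq_sym => /negbT.
    exists u => //.
    have xH := nH x (negbT xR) xv; have yH := nH y (negbT yR) yv.
    have sx : s x = x.
      by rewrite /s (negbTE xv); case: ifP => // /eqP xu; move: xH; rewrite xu uH.
    have sy : s y = y.
      by rewrite /s (negbTE yv); case: ifP => // /eqP yu; move: yH; rewrite yu uH.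
    have sv : s v = u by rewrite /s eq_sym (negbTE uv) eqxx.
    by rewrite -sv -{1}sx -sy !ds.
  have := R0min _ (introT (resP _ _ _) res').
  by rewrite (cardsD1 v R0) vR0 add1n ltnn.
-
  pose sw z := if z == w then v else if z == v then w else z.
  have wv : w != v by apply: contraNneq wR0 => ->.
  have swK : involutive sw.
    move=> z; rewrite /sw; have [->|zu] := eqVneq z w.
      by rewrite eqxx eq_sym (negbTE wv).
    have [->|zv] := eqVneq z v; first by rewrite eqxx.
    by rewrite (negbTE zu) (negbTE zv).
  have swe1 a c : e (sw a) c = e a c.
    rewrite /sw; have [->|au] := eqVneq a w; first by apply: twin.
    have [->|av] := eqVneq a v; first by apply: twin.
    by [].
  have swe a b : e (sw a) (sw b) = e a b.
    by rewrite swe1 esym swe1 esym.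
  have dsw := @dist_inv T e sw swK swe.
  have res' : resolving e (sw @: R0).
    move=> x y xy.
    have sxy : sw x != sw y by rewrite (inj_eq (inv_inj swK)).
    case: (R0r _ _ sxy) => r rR d.
    exists (sw r); first by apply: imset_f.
    by rewrite -{1}(swK x) -{1}(swK y) !dsw.
  have b' : metric_basis e (sw @: R0).
    split=> // R' hR'; rewrite card_imset; last exact: (inv_inj swK).
    by apply: R0min; apply/resP.
  have := forced _ b'; case/imsetP => r rR vr.
  have : r = w by rewrite -(swK r) -vr /sw eq_sym (negbTE wv) eqxx.
  by move=> rw; move: wR0; rewrite -rw rR.
Qed.
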